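(* Let $a_1\ge1$ be an integer and $n \ge 4$ an even integer. Suppose that $p$ is a high primitive divisor of $\ell_n$ such that $(D \mid p) = -1$, and put $v := \nu_p(\ell_n)$. Then there exists $\bm{x} \in \mathcal{L}(f)$ such that $\tau(\bm{x}; p^v) = 2n$, $x_s \not\equiv x_t \pmod{p^v}$ for all integers $s,t$ with $0 < s < t < 2n$ and $s \equiv t \pmod 2$, and $x_j \not\equiv 0 \pmod{p^v}$ for all $j \ge 0$.
   Context: Let $f := X^2 - a_1X - 1$, $D := a_1^2+4$, and $\alpha,\beta$ the roots of $f$ ($\alpha\beta=-1$, $\alpha+\beta=a_1$). $\mathcal{L}(f)$ is the set of integer sequences $\bm{x}=(x_n)_{n\ge0}$ with $x_{n+2} = a_1x_{n+1} + x_n$ for all $n\ge0$. For an integer $m\ge1$, $\tau(\bm{x}; m)$ is the minimal integer $t \ge 1$ with $x_{n+t}\equiv x_n \pmod m$ for all sufficiently large $n$. The Lehmer sequence is $\ell_n := \frac{\alpha^n - (-\beta)^n}{\alpha + \beta}$ for odd $n$ and $\ell_n := \frac{\alpha^n - (-\beta)^n}{\alpha^2 - \beta^2}$ for even $n$ (integers). A prime $p$ is a primitive divisor of $\ell_n$ if $p \mid \ell_n$ but $p \nmid (\alpha^2-\beta^2)^2\ell_1\cdots\ell_{n-1}$, where $(\alpha^2-\beta^2)^2 = a_1^2D$; it is a high primitive divisor if it is an odd primitive divisor with $p^{\nu_p(\ell_n)} > n$, $\nu_p$ being the $p$-adic valuation. $(D\mid p)$ is the Legendre symbol. *)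

(* Defs.v *)
From mathcomp Require Import all_boot all_order all_algebra all_field.
Set Implicit Arguments. Unset Strict Implicit. Unset Printing Implicit Defensive.
Import Order.TTheory GRing.Theory Num.Theory.
Local Open Scope ring_scope.

Definition discr (a1 : nat) : nat := (a1 ^ 2 + 4)%N.

(* The two roots of X^2 - a1 X - 1 in algC *)
Definition alpha (a1 : nat) : algC := (a1%:R + sqrtC (discr a1)%:R) / 2.
Definition beta (a1 : nat) : algC := (a1%:R - sqrtC (discr a1)%:R) / 2.

Definition lehmerC (a1 n : nat) : algC :=
  let a := alpha a1 in let b := beta a1 in
  if odd n then (a ^+ n - (- b) ^+ n) / (a + b)
  else (a ^+ n - (- b) ^+ n) / (a ^+ 2 - b ^+ 2).

(* lehmerC a1 n is an integer; ell a1 n is that integer. *)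
Definition ell (a1 n : nat) : int := Num.floor (lehmerC a1 n).

Definition nu (p : nat) (z : int) : nat := logn p `|z|%N.

(* primitive divisor of ell_n:  p | ell_n, p does not divide
   (alpha^2-beta^2)^2 * ell_1 ... ell_{n-1}, with (alpha^2-beta^2)^2 = a1^2 D *)
Definition primitive_divisor (a1 n p : nat) : Prop :=
  prime p /\ (p%:Z %| ell a1 n)%Z /\
  ~~ (p%:Z %| (a1 ^ 2 * discr a1)%:Z * \prod_(1 <= i < n) ell a1 i)%Z.

Definition high_primitive_divisor (a1 n p : nat) : Prop :=
  primitive_divisor a1 n p /\ odd p /\ (n < p ^ nu p (ell a1 n))%N.

Definition legendre (d : int) (p : nat) : int :=
  if (p%:Z %| d)%Z then 0
  else if [exists y : 'I_p, ((y%:Z) ^+ 2 == d %[mod p%:Z])%Z] then 1 else -1.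

Definition in_L (a1 : nat) (x : nat -> int) : Prop :=
  forall k : nat, x k.+2 = a1%:Z * x k.+1 + x k.

Definition eventual_period (x : nat -> int) (m t : nat) : Prop :=
  exists N : nat, forall k : nat, (N <= k)%N -> (x (k + t)%N == x k %[mod m%:Z])%Z.

Definition tau_eq (x : nat -> int) (m t : nat) : Prop :=
  (1 <= t)%N /\ eventual_period x m t /\
  forall t' : nat, (1 <= t')%N -> (t' < t)%N -> ~ eventual_period x m t'.

(* Main.v *)
Require Import Defs.
From mathcomp Require Import all_boot all_order all_algebra all_field.
From mathcomp Require Import ring zify.
Import Order.TTheory GRing.Theory Num.Theory.
Local Open Scope ring_scope.
Set Implicit Arguments. Unset Strict Implicit. Unset Printing Implicit Defensive.

Section Seqs.
Variable a : nat.

Fixpoint aux (y0 y1 : int) (k : nat) : int * int :=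
  match k with
  | 0%N => (y0, y1)
  | k'.+1 => ((aux y0 y1 k').2, a%:Z * (aux y0 y1 k').2 + (aux y0 y1 k').1)
  end.
Definition lseq y0 y1 k := (aux y0 y1 k).1.

Lemma lseq0 y0 y1 : lseq y0 y1 0 = y0. Proof. by []. Qed.
Lemma lseq1 y0 y1 : lseq y0 y1 1 = y1. Proof. by []. Qed.
Lemma lseq_L y0 y1 : in_L a (lseq y0 y1).
Proof. by move=> k. Qed.

Definition U := lseq 0 1.
Definition V := lseq 2 a%:Z.
Definition W := lseq 1 0.

Lemma two_ind (P : nat -> Prop) : P 0%N -> P 1%N -> (forall k, P k -> P k.+1 -> P k.+2) -> forall k, P k.
Proof.
move=> P0 P1 IH k; suff: P k /\ P k.+1 by case.
elim: k => [|k [h1 h2]]; first by split.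
by split=> //; apply: IH.
Qed.

Lemma addL (z : nat -> int) : in_L a z -> forall s j, z (s + j)%N = U j * z s.+1 + W j * z s.
Proof.
move=> Hz s; apply: two_ind.
- by rewrite addn0 /U /W /lseq /= mul0r add0r mul1r.
- by rewrite addn1 /U /W /lseq /= mul1r mul0r addr0.
- move=> k h1 h2; rewrite !addnS Hz -addnS h2 h1.
  rewrite /U /W !(lseq_L 0 1 k) !(lseq_L 1 0 k); ring.
Qed.

Lemma cassini (y z : nat -> int) : in_L a y -> in_L a z -> forall k,
  y k.+1 * z k - y k * z k.+1 = (-1) ^+ k * (y 1%N * z 0%N - y 0%N * z 1%N).
Proof.
move=> Hy Hz; elim=> [|k IH]; first by rewrite expr0 mul1r.
rewrite Hy Hz exprS -mulrA -IH; ring.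
Qed.

End Seqs.

Section Alg.
Variable a : nat.
Let s : algC := sqrtC (discr a)%:R.
Let al := alpha a.
Let be := beta a.

Lemma s2 : s ^+ 2 = (a%:R) ^+ 2 + 4%:R.
Proof. by rewrite /s sqrtCK /discr natrD natrX. Qed.

Lemma s_neq0 : s != 0.
Proof.
apply/eqP=> h; have := sqrtCK ((discr a)%:R : algC); rewrite -/s h expr0n /=.
by move/eqP; rewrite eq_sym pnatr_eq0 /discr addn4.
Qed.

Lemma alE : al = (a%:R + s) / 2. Proof. by []. Qed.
Lemma beE : be = (a%:R - s) / 2. Proof. by []. Qed.

Lemma albe : al * be = -1.
Proof.
have -> : al * be = (a%:R^+2 - s^+2)/4%:R by rewrite alE beE; field.
by rewrite s2; field.
Qed.

Lemma al2 : al ^+ 2 = a%:R * al + 1.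
Proof.
apply/eqP; rewrite -subr_eq0; apply/eqP.
have -> : al^+2 - (a%:R * al + 1) = (s^+2 - a%:R^+2 - 4%:R)/4%:R by rewrite alE; field.
by rewrite s2; field.
Qed.

Lemma be2 : be ^+ 2 = a%:R * be + 1.
Proof.
apply/eqP; rewrite -subr_eq0; apply/eqP.
have -> : be^+2 - (a%:R * be + 1) = (s^+2 - a%:R^+2 - 4%:R)/4%:R by rewrite beE; field.
by rewrite s2; field.
Qed.

Definition cc (y : nat -> int) : algC := ((y 1%N)%:~R - be * (y 0%N)%:~R) / s.
Definition dd (y : nat -> int) : algC := (al * (y 0%N)%:~R - (y 1%N)%:~R) / s.

Lemma intr_natz (k : nat) : (k%:Z)%:~R = k%:R :> algC. Proof. by []. Qed.

Lemma closed (y : nat -> int) : in_L a y -> forall k,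
  (y k)%:~R = cc y * al ^+ k + dd y * be ^+ k.
Proof.
move=> Hy; have sn := s_neq0.
apply: two_ind.
- rewrite /cc /dd !expr0 !mulr1. rewrite alE beE. by field.
- rewrite /cc /dd !expr1 alE beE. by field.
- move=> k h1 h2; rewrite Hy intrD intrM intr_natz h1 h2.
  have ea : al ^+ k.+2 = al^+2 * al^+k by rewrite -exprD add2n.
  have eb : be ^+ k.+2 = be^+2 * be^+k by rewrite -exprD add2n.
  rewrite ea eb al2 be2 !exprS; ring.
Qed.

Lemma intr_injC (x y : int) : x%:~R = y%:~R :> algC -> x = y.
Proof. by move/eqP; rewrite eqr_int => /eqP. Qed.

Lemma U_cf k : (U a k)%:~R = (al ^+ k - be ^+ k) / s.
Proof.
rewrite (closed (lseq_L a 0 1)) /cc /dd.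
rewrite [lseq a 0 1 0]/= [lseq a 0 1 1]/=.
have sn := s_neq0. rewrite /intmul /=. by field.
Qed.

Lemma V_cf k : (V a k)%:~R = al ^+ k + be ^+ k.
Proof.
rewrite (closed (lseq_L a 2 a)) /cc /dd.
rewrite [lseq a 2 a 0]/= [lseq a 2 a 1]/= intr_natz.
have sn := s_neq0. have -> : ((2%:Z)%:~R : algC) = 2%:R by [].
rewrite alE beE. by field.
Qed.

Lemma m1 j : (-1) ^+ j = al ^+ j * be ^+ j :> algC.
Proof. by rewrite -exprMn albe. Qed.

Lemma sgn_cast j : (((-1) ^+ j : int)%:~R : algC) = (-1) ^+ j.
Proof. exact: intr_sign. Qed.

Lemma id2 (z : nat -> int) : in_L a z -> forall i j,
  z (i + 2 * j)%N + (-1) ^+ j * z i = V a j * z (i + j)%N.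
Proof.
move=> Hz i j; apply: intr_injC.
rewrite !intrD !intrM V_cf !(closed Hz) sgn_cast m1.
rewrite mul2n -addnn !exprD; ring.
Qed.

Lemma id1 (y : nat -> int) : in_L a y -> forall i j,
  let X k := 2 * y k.+1 - a%:Z * y k in
  X (i + 2 * j)%N - (-1) ^+ j * X i = (discr a)%:Z * U a j * y (i + j)%N.
Proof.
move=> Hy i j X; apply: intr_injC; rewrite /X.
rewrite ?(intrD, intrM, intrN) U_cf !(closed Hy) sgn_cast m1 ?mulr1z.
have -> : (((discr a)%:Z)%:~R : algC) = s ^+ 2 by rewrite /s sqrtCK.
rewrite intr_natz.
have sn := s_neq0.
rewrite mul2n -addnn !exprS !exprD alE beE; by field.
Qed.

Lemma U2 h : U a (h + h)%N = U a h * V a h.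
Proof.
apply: intr_injC; rewrite intrM U_cf V_cf !U_cf !exprD.
have sn := s_neq0. by field.
Qed.
End Alg.

Section Ell.
Variable a : nat.
Hypothesis a_pos : (0 < a)%N.

Lemma a_dvd k : (a%:Z %| U a (k.*2))%Z /\ (a%:Z %| V a (k.*2).+1)%Z.
Proof.
elim: k => [|k [h1 h2]]; first by split; rewrite //= dvdzz.
rewrite doubleS; split.
- by rewrite /U (lseq_L a 0 1 _) rpredD // dvdz_mulr // dvdzz.
- by rewrite /V (lseq_L a 2 a _) rpredD // dvdz_mulr // dvdzz.
Qed.

Lemma lehmer_even k : ~~ odd k -> lehmerC a k = (U a k)%:~R / a%:R.
Proof.
move=> ek; rewrite /lehmerC (negbTE ek) exprNn -signr_odd (negbTE ek) expr0 mul1r.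
rewrite U_cf.
have sn := s_neq0 a.
have an : (a%:R : algC) != 0 by rewrite pnatr_eq0 -lt0n.
have e2 : alpha a ^+ 2 - beta a ^+ 2 = sqrtC (discr a)%:R * a%:R by rewrite /alpha /beta; field.
by rewrite e2 invfM mulrA.
Qed.

Lemma lehmer_odd k : odd k -> lehmerC a k = (V a k)%:~R / a%:R.
Proof.
move=> ok; rewrite /lehmerC ok exprNn -signr_odd ok expr1.
rewrite V_cf.
have an : (a%:R : algC) != 0 by rewrite pnatr_eq0 -lt0n.
have e2 : alpha a + beta a = a%:R by rewrite /alpha /beta; field.
rewrite e2. by field.
Qed.

Lemma ellE k : a%:Z * ell a k = if odd k then V a k else U a k.
Proof.
have an : (a%:R : algC) != 0 by rewrite pnatr_eq0 -lt0n.
have az : a%:Z != 0 by rewrite -lt0n.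
rewrite /ell; case: ifP => ok.
- have hd : (a%:Z %| V a k)%Z.
    by have [_ h'] := a_dvd k./2; rewrite -(odd_double_half k) ok add1n.
  rewrite lehmer_odd // -(divzK hd) intrM intr_natz mulfK // intrKfloor.
  by rewrite mulrC divzK.
- have hd : (a%:Z %| U a k)%Z.
    by have [h' _] := a_dvd k./2; rewrite -(odd_double_half k) ok add0n.
  rewrite lehmer_even ?ok // -(divzK hd) intrM intr_natz mulfK // intrKfloor.
  by rewrite mulrC divzK.
Qed.
End Ell.

Section Count.
Variable m : nat.
Hypothesis m_pos : (0 < m)%N.

Lemma ord_dvd_eq (x y : 'I_m) : (m%:Z %| (x : nat)%:Z - (y : nat)%:Z)%Z -> x = y.
Proof.
rewrite -eqz_mod_dvd !modz_nat !modn_small // => /eqP h.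
by apply: val_inj; move: h => [].
Qed.

Definition formset (f : int * int) : {set 'I_m * 'I_m} :=
  [set v : 'I_m * 'I_m | (m%:Z %| f.1 * (v.1 : nat)%:Z + f.2 * (v.2 : nat)%:Z)%Z].

Lemma formset_card f : coprimez m%:Z f.1 || coprimez m%:Z f.2 -> (#|formset f| <= m)%N.
Proof.
case/orP => cf.
- rewrite -(card_in_imset (f := snd)).
    by apply: leq_trans (max_card _) _; rewrite card_ord.
  move=> [x1 x2] [y1 y2]; rewrite !inE /= => hx hy e; rewrite -e in hy *.
  congr (_, _); apply: ord_dvd_eq.
  have := rpredB hx hy.
  have -> : f.1 * x1%:Z + f.2 * x2%:Z - (f.1 * y1%:Z + f.2 * x2%:Z)
           = f.1 * (x1%:Z - y1%:Z) by ring.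
  by rewrite Gauss_dvdzr.
- rewrite -(card_in_imset (f := fst)).
    by apply: leq_trans (max_card _) _; rewrite card_ord.
  move=> [x1 x2] [y1 y2]; rewrite !inE /= => hx hy e; rewrite -e in hy *.
  congr (_, _); apply: ord_dvd_eq.
  have := rpredB hx hy.
  have -> : f.1 * x1%:Z + f.2 * x2%:Z - (f.1 * x1%:Z + f.2 * y2%:Z)
           = f.2 * (x2%:Z - y2%:Z) by ring.
  by rewrite Gauss_dvdzr.
Qed.

Definition badset (fs : seq (int * int)) : {set 'I_m * 'I_m} :=
  \bigcup_(f <- fs) formset f.

Lemma badset_card fs : (forall f, f \in fs -> coprimez m%:Z f.1 || coprimez m%:Z f.2) ->
  (#|badset fs| <= size fs * m)%N.
Proof.
elim: fs => [|f fs IH] H; first by rewrite /badset big_nil cards0.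
rewrite /badset big_cons -/(badset fs) /=.
apply: leq_trans (leq_card_setU _ _) _.
rewrite mulSn leq_add //; first by apply: formset_card; apply: H; rewrite inE eqxx.
by apply: IH => g hg; apply: H; rewrite inE hg orbT.
Qed.

Lemma count_exists fs : (forall f, f \in fs -> coprimez m%:Z f.1 || coprimez m%:Z f.2) ->
  (size fs < m)%N ->
  exists y0 y1 : nat, forall f, f \in fs -> ~~ (m%:Z %| f.1 * y0%:Z + f.2 * y1%:Z)%Z.
Proof.
move=> H hs.
case: (pickP (fun v => v \notin badset fs)) => [[x1 x2] hx|hall].
- exists x1, x2 => f hf; apply/negP => hd; move/negP: hx; apply.
  elim: (fs) hf => // g gs IH; rewrite inE /badset big_cons -/(badset gs) inE.
  case/orP=> [/eqP <-|/IH ->]; last by rewrite orbT.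
  by rewrite inE hd.
- have : (#|[set: 'I_m * 'I_m]| <= #|badset fs|)%N.
    by apply: subset_leq_card; apply/subsetP => v _; move/negbFE: (hall v).
  rewrite cardsT card_prod card_ord => h.
  have := leq_trans h (badset_card H).
  by rewrite leq_pmul2r // leqNgt hs.
Qed.
End Count.

Section Core.
Variables (a p v : nat).
Hypothesis pP : prime p.
Hypothesis v_pos : (0 < v)%N.
Let m := (p ^ v)%N.

Lemma copz (x : int) : ~~ (p%:Z %| x)%Z -> coprimez m%:Z x.
Proof. by rewrite coprimezE absz_nat => h; apply: coprimeXl; rewrite prime_coprime. Qed.

Lemma canc (c x : int) : ~~ (p%:Z %| c)%Z -> (m%:Z %| c * x)%Z -> (m%:Z %| x)%Z.
Proof. by move=> hc; rewrite Gauss_dvdzr // copz. Qed.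

Lemma p_of_m (x : int) : (m%:Z %| x)%Z -> (p%:Z %| x)%Z.
Proof.
apply: dvdz_trans; rewrite dvdzE !absz_nat /m.
by rewrite -{1}(expn1 p) dvdn_exp2l.
Qed.

Lemma euclidz (x y : int) : (p%:Z %| x * y)%Z -> (p%:Z %| x)%Z || (p%:Z %| y)%Z.
Proof. by rewrite !dvdzE abszM absz_nat Euclid_dvdM. Qed.

Lemma p_not_unit : ~~ (p%:Z %| 1)%Z.
Proof. by rewrite dvdzE absz_nat dvdn1; case: p pP => [|[|]]. Qed.

Lemma p_not_sign k : ~~ (p%:Z %| (-1) ^+ k)%Z.
Proof. by rewrite -[(-1) ^+ k]mulr1 dvdzE abszMsign absz_nat dvdn1; case: p pP => [|[|]]. Qed.

Lemma reduce (z : nat -> int) t : in_L a z -> (m%:Z %| U a t)%Z -> ~~ (p%:Z %| W a t)%Z ->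
  forall q r, (m%:Z %| z (r + q * t)%N)%Z -> (m%:Z %| z r)%Z.
Proof.
move=> Hz hU hW; elim=> [|q IH] r; first by rewrite mul0n addn0.
rewrite mulSn addnCA addnC => h; apply: IH.
have e := addL Hz (r + q * t) t; rewrite e in h.
apply: (canc hW).
have := rpredB h (dvdz_mulr (z (r + q * t).+1) hU).
by rewrite [U a t * _]mulrC addrAC subrr add0r.
Qed.

Definition part (z : nat -> int) k := 2 * z k.+1 - a%:Z * z k.

Lemma part_L z : in_L a z -> in_L a (part z).
Proof. by move=> Hz k; rewrite /part !Hz; ring. Qed.

Lemma UW_cop k : ~~ (p%:Z %| W a k)%Z || ~~ (p%:Z %| U a k)%Z.
Proof.
rewrite -negb_and; apply/negP => /andP [h1 h2].
have := cassini (lseq_L a 0 1) (lseq_L a 1 0) k.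
rewrite /= subr0 mulr1 => e.
have : (p%:Z %| U a k.+1 * W a k - U a k * W a k.+1)%Z.
  by apply: rpredB; [exact: dvdz_mull | exact: dvdz_mulr].
by rewrite /U /W e (negbTE (p_not_sign k)).
Qed.

Lemma PQ_cop k : ~~ (p%:Z %| (discr a)%:Z)%Z ->
  ~~ (p%:Z %| part (W a) k)%Z || ~~ (p%:Z %| part (U a) k)%Z.
Proof.
move=> hD; rewrite -negb_and; apply/negP => /andP [h1 h2].
have := cassini (part_L (lseq_L a 0 1)) (part_L (lseq_L a 1 0)) k.
move=> e.
have : (p%:Z %| part (U a) k.+1 * part (W a) k - part (U a) k * part (W a) k.+1)%Z.
  by apply: rpredB; [exact: dvdz_mull | exact: dvdz_mulr].
rewrite /U /W e; move/euclidz; rewrite (negbTE (p_not_sign k)) /=.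
have -> : part (lseq a 0 1) 1 * part (lseq a 1 0) 0 - part (lseq a 0 1) 0 * part (lseq a 1 0) 1
   = - (discr a)%:Z.
  by rewrite /part /lseq /= /discr PoszD PoszM; ring.
move=> h; move/negP: hD; apply; move: h; by rewrite !dvdzE abszN.
Qed.

End Core.

Section Main.
Variables (a n p v : nat).
Hypothesis a_pos : (0 < a)%N.
Hypothesis pP : prime p.
Hypothesis p_odd : odd p.
Hypothesis n4 : (4 <= n)%N.
Hypothesis n_even : ~~ odd n.
Hypothesis n_lt : (n < p ^ v)%N.
Hypothesis mU : ((p ^ v)%:Z %| U a n)%Z.
Hypothesis pD : ~~ (p%:Z %| (discr a)%:Z)%Z.
Hypothesis prim : forall j, (0 < j < n)%N -> ~~ (p%:Z %| if odd j then V a j else U a j)%Z.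
Let m := (p ^ v)%N.

Lemma v_pos : (0 < v)%N.
Proof. by case: v n_lt => // ; rewrite expn0 ltnS leqn0 => /eqP n0; move: n4; rewrite n0. Qed.

Lemma m_pos : (0 < m)%N.
Proof. by rewrite /m expn_gt0 prime_gt0. Qed.

Lemma p2 : ~~ (p%:Z %| 2)%Z.
Proof. by rewrite dvdzE absz_nat; apply/negP => /(dvdn_leq (isT : 0 < 2)%N); case: p pP p_odd => [|[|[|]]]. Qed.

Lemma W_cop t : (p%:Z %| U a t)%Z -> ~~ (p%:Z %| W a t)%Z.
Proof. by move=> h; have := UW_cop a pP t; rewrite h orbF. Qed.

Let h := n./2.
Lemma nhh : n = (h + h)%N.
Proof. by rewrite addnn /h -[in LHS](odd_double_half n) (negbTE n_even). Qed.

Lemma h_bounds : (0 < h < n)%N.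
Proof. have := nhh; lia. Qed.

Lemma mUV : if odd h then (m%:Z %| U a h)%Z else (m%:Z %| V a h)%Z.
Proof.
have := mU; rewrite nhh U2 => hd.
have := prim h_bounds; case: ifP => oh ph.
- by move: hd; rewrite Gauss_dvdzl // copz.
- by move: hd; rewrite Gauss_dvdzr // copz.
Qed.


Lemma Y_expand (y0 y1 : int) k :
  lseq a y0 y1 k = W a k * y0 + U a k * y1.
Proof. by rewrite -[k]add0n (addL (lseq_L a y0 y1)) /= addrC. Qed.

Lemma X_expand (y0 y1 : int) k :
  part a (lseq a y0 y1) k = part a (W a) k * y0 + part a (U a) k * y1.
Proof. by rewrite /part !Y_expand; ring. Qed.

Lemma form_cop k : (coprimez m%:Z (W a k) || coprimez m%:Z (U a k)) /\
   (coprimez m%:Z (part a (W a) k) || coprimez m%:Z (part a (U a) k)).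
Proof.
split.
- by case/orP: (UW_cop a pP k) => h1; rewrite (copz v pP h1) ?orbT.
- by case/orP: (PQ_cop pP k pD) => h1; rewrite (copz v pP h1) ?orbT.
Qed.

Lemma goodY : exists y0 y1 : int,
  (forall k, ~~ (m%:Z %| lseq a y0 y1 k)%Z) /\
  (forall k, ~~ (m%:Z %| part a (lseq a y0 y1) k)%Z).
Proof.
have hb := h_bounds; have mpos := m_pos; have vp := v_pos.
have := mUV; case: ifP => oh hm.
-
  pose fs := [seq (W a k, U a k) | k <- iota 0 h] ++
             [seq (part a (W a) k, part a (U a) k) | k <- iota 0 h].
  have [y0 [y1 Hy]] : exists y0 y1 : nat, forall f, f \in fs ->
      ~~ (m%:Z %| f.1 * y0%:Z + f.2 * y1%:Z)%Z.
    apply: count_exists => //.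
    + move=> f; rewrite mem_cat => /orP [] /mapP [k _ ->] /=; by case: (form_cop k).
    + by rewrite size_cat !size_map size_iota; have := nhh; lia.
  exists y0%:Z, y1%:Z.
  have hW : ~~ (p%:Z %| W a h)%Z by apply: W_cop; apply: (p_of_m vp).
  have hpos : (0 < h)%N by case/andP: hb.
  split=> k; apply/negP => hk.
  + have := reduce pP (lseq_L a y0 y1) hm hW (q := (k %/ h)%N) (r := (k %% h)%N).
    rewrite addnC -divn_eq => /(_ hk).
    rewrite Y_expand; apply/negP; apply: (Hy (W a _, U a _)).
    by rewrite mem_cat; apply/orP; left; apply/mapP; exists (k %% h)%N; rewrite // mem_iota ltn_mod.
  + have := reduce pP (part_L (lseq_L a y0 y1)) hm hW (q := (k %/ h)%N) (r := (k %% h)%N).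
    rewrite addnC -divn_eq => /(_ hk).
    rewrite X_expand; apply/negP; apply: (Hy (part a (W a) _, part a (U a) _)).
    by rewrite mem_cat; apply/orP; right; apply/mapP; exists (k %% h)%N; rewrite // mem_iota ltn_mod.
-
  pose fs := [seq (W a k, U a k) | k <- iota 0 n].
  have [y0 [y1 Hy]] : exists y0 y1 : nat, forall f, f \in fs ->
      ~~ (m%:Z %| f.1 * y0%:Z + f.2 * y1%:Z)%Z.
    apply: count_exists => //.
    + move=> f /mapP [k _ ->] /=; by case: (form_cop k).
    + by rewrite size_map size_iota.
  exists y0%:Z, y1%:Z.
  have hW : ~~ (p%:Z %| W a n)%Z by apply: W_cop; apply: (p_of_m vp).
  have npos : (0 < n)%N by case/andP: hb => _; apply: leq_ltn_trans.
  have HY : forall k, ~~ (m%:Z %| lseq a y0 y1 k)%Z.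
    move=> k; apply/negP => hk.
    have := reduce pP (lseq_L a y0 y1) mU hW (q := (k %/ n)%N) (r := (k %% n)%N).
    rewrite addnC -divn_eq => /(_ hk).
    rewrite Y_expand; apply/negP; apply: (Hy (W a _, U a _)).
    by apply/mapP; exists (k %% n)%N; rewrite // mem_iota ltn_mod.
  split => // k; apply/negP => hk.
  set Y := lseq a y0 y1.
  have e1 : part a Y (k + 2 * h) - (-1) ^+ h * part a Y k = (discr a)%:Z * U a h * Y (k + h)%N
    := id1 (lseq_L a y0 y1) k h.
  have e2 := id2 (part_L (lseq_L a y0 y1)) k h.
  rewrite -signr_odd oh expr0 mul1r in e1 e2.
  have hU : ~~ (p%:Z %| U a h)%Z by have := prim hb; rewrite oh.
  move/negP: (HY (k + h)%N); apply.
  apply: (canc pP hU); apply: (canc pP pD).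
  rewrite mulrA -e1.
  have h2 : (m%:Z %| part a Y (k + 2 * h)%N + part a Y k)%Z by rewrite e2 dvdz_mulr.
  have h3 := rpredB h2 hk.
  rewrite addrK in h3.
  by apply: rpredB.
Qed.

Section Final.
Variables y0 y1 : int.
Hypothesis HY : forall k, ~~ (m%:Z %| lseq a y0 y1 k)%Z.
Hypothesis HX : forall k, ~~ (m%:Z %| part a (lseq a y0 y1) k)%Z.
Let Y := lseq a y0 y1.
Let X := part a Y.
Let XL : in_L a X := part_L (lseq_L a y0 y1).

Lemma e1_of i j : X (i + 2 * j)%N - (-1) ^+ j * X i = (discr a)%:Z * U a j * Y (i + j)%N.
Proof. exact: (id1 (lseq_L a y0 y1) i j). Qed.

Lemma e2_of i j : X (i + 2 * j)%N + (-1) ^+ j * X i = V a j * X (i + j)%N.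
Proof. exact: (id2 XL i j). Qed.

Lemma distinct s t : (s < t)%N -> (t < 2 * n)%N -> odd s = odd t ->
  ~~ (X s == X t %[mod m%:Z])%Z.
Proof.
move=> st tn ost.
have ev : ~~ odd (t - s)%N by rewrite oddB ?(ltnW st) // ost addbb.
set j := (t - s)./2.
have tj : t = (s + 2 * j)%N.
  by rewrite /j -[in LHS](subnKC (ltnW st)) -{1}(odd_double_half (t - s)) (negbTE ev) add0n -mul2n.
have jb : (0 < j < n)%N. clearbody j. move: tj st tn; clear. lia.
rewrite eqz_mod_dvd; apply/negP => hd.
have hd' : (m%:Z %| X t - X s)%Z by rewrite -opprB rpredN.
have := prim jb; rewrite tj in hd'; case: ifP => oj pj.
- have := e2_of s j; rewrite -signr_odd oj expr1 mulN1r => e.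
  move/negP: (HX (s + j)%N); apply; apply: (canc pP pj); by rewrite -e.
- have := e1_of s j; rewrite -signr_odd oj expr0 mul1r => e.
  move/negP: (HY (s + j)%N); apply; apply: (canc pP pj); apply: (canc pP pD).
  by rewrite mulrA -e.
Qed.

Lemma per k : (X (k + 2 * n)%N %% m%:Z)%Z = (X k %% m%:Z)%Z.
Proof.
apply/eqP; rewrite eqz_mod_dvd.
have := e1_of k n; rewrite -signr_odd (negbTE n_even) expr0 mul1r => ->.
by rewrite dvdz_mulr // dvdz_mull.
Qed.

Lemma perq q k : (X (k + q * (2 * n))%N %% m%:Z)%Z = (X k %% m%:Z)%Z.
Proof.
elim: q => [|q IH]; first by rewrite mul0n addn0.
have -> : (k + q.+1 * (2 * n) = (k + q * (2 * n)) + 2 * n)%N by rewrite mulSn; lia.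
by rewrite per IH.
Qed.

Lemma even_form e : ~~ odd e -> e = (2 * e./2)%N.
Proof. by move=> he; rewrite mul2n -[in LHS](odd_double_half e) (negbTE he). Qed.

Lemma tau : tau_eq X m (2 * n).
Proof.
have n4' := n4.
split; first by lia.
split; first by exists 0%N => k _; apply/eqP; apply: per.
move=> t' h1 h2 [N hN].
have hN' : forall k, (N <= k)%N -> (X (k + t')%N %% m%:Z)%Z = (X k %% m%:Z)%Z.
  by move=> k hk; apply/eqP; apply: hN.
have step2 : forall k, (N <= k)%N -> (X (k + 2 * t')%N %% m%:Z)%Z = (X k %% m%:Z)%Z.
  move=> k hk; rewrite mul2n -addnn addnA hN' ?hN' //; lia.
pose K := (1 + N * (2 * n))%N.
have hK : (N <= K)%N by rewrite /K; nia.
have [e [ee eb he]] : exists e, [/\ ~~ odd e, (0 < e < 2 * n)%N &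
    (X (K + e)%N %% m%:Z)%Z = (X K %% m%:Z)%Z].
  case: (boolP (odd t')) => ot.
  - have tn : t' != n by apply/eqP => e; move: ot; rewrite e (negbTE n_even).
    case: (ltnP (2 * t') (2 * n)) => c.
    + exists (2 * t')%N; split; [by rewrite oddM | lia | exact: step2].
    + exists (2 * t' - 2 * n)%N; split.
      * by rewrite oddB // !oddM.
      * move/eqP: tn => tn; lia.
      * rewrite -(per (K + _)) -(step2 K hK).
        by have -> : (K + (2 * t' - 2 * n) + 2 * n = K + 2 * t')%N by lia.
  - by exists t'; split => //; [lia | apply: hN'].
have e1 : (X (1 + e)%N %% m%:Z)%Z = (X 1%N %% m%:Z)%Z.
  rewrite -(perq N (1 + e)) -(perq N 1).
  have -> : (1 + e + N * (2 * n) = K + e)%N by rewrite /K; lia.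
  by [].
have ef := even_form ee.
have d1 : (1 < 1 + e)%N by lia.
have d2 : (1 + e < 2 * n)%N.
  move: (e./2) ef eb => f -> eb'; clear -eb'; lia.
have d3 : odd 1 = odd (1 + e) by rewrite oddD (negbTE ee).
have := distinct d1 d2 d3.
by rewrite e1 eqxx.
Qed.

End Final.


Lemma core : exists x : nat -> int,
    [/\ in_L a x,
        tau_eq x m (2 * n),
        (forall s t : nat, (0 < s)%N -> (s < t)%N -> (t < 2 * n)%N ->
           odd s = odd t -> ~~ (x s == x t %[mod m%:Z])%Z)
      & (forall j : nat, ~~ (m%:Z %| x j)%Z)].
Proof.
have [y0 [y1 [HY HX]]] := goodY.
exists (part a (lseq a y0 y1)); split.
- exact: part_L (lseq_L a y0 y1).
- exact: tau.
- by move=> s t _ st tn ost; apply: distinct.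
- exact: HX.
Qed.
End Main.

Lemma dvd_prod (F : nat -> int) n j : (1 <= j < n)%N -> (F j %| \prod_(1 <= i < n) F i)%Z.
Proof.
case/andP=> j1 jn.
rewrite (big_cat_nat (n := j)) //= ?(ltnW jn) //.
apply: dvdz_mull; rewrite big_ltn //.
by apply: dvdz_mulr; apply: dvdzz.
Qed.

Unset Implicit Arguments.
Theorem mainTheorem14 (a1 n p : nat) :
  (1 <= a1)%N -> (4 <= n)%N -> ~~ odd n ->
  high_primitive_divisor a1 n p ->
  legendre (discr a1)%:Z p = -1 ->
  let v := nu p (ell a1 n) in
  exists x : nat -> int,
    [/\ in_L a1 x,
        tau_eq x (p ^ v) (2 * n),
        (forall s t : nat, (0 < s)%N -> (s < t)%N -> (t < 2 * n)%N ->
           odd s = odd t -> ~~ (x s == x t %[mod (p ^ v)%:Z])%Z)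
      & (forall j : nat, ~~ ((p ^ v)%:Z %| x j)%Z)].
Proof.
move=> a1p n4 nev [[pP [pdiv pnd]] [podd phigh]] _ v.
have mell : ((p ^ v)%:Z %| ell a1 n)%Z.
  by rewrite dvdzE absz_nat /v /nu pfactor_dvdnn.
have mU : ((p ^ v)%:Z %| U a1 n)%Z.
  by have := ellE a1p n; rewrite (negbTE nev) => <-; apply: dvdz_mull.
have big : forall z : int, (p%:Z %| z)%Z -> (p%:Z %| (a1 ^ 2 * discr a1)%:Z)%Z
    \/ (exists2 j, (1 <= j < n)%N & (p%:Z %| ell a1 j)%Z) -> False.
  move=> _ _ [h|[j hj h]]; move/negP: pnd; apply.
  - by apply: dvdz_mulr.
  - by apply: dvdz_mull; apply: dvdz_trans h (dvd_prod _ hj).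
have pD : ~~ (p%:Z %| (discr a1)%:Z)%Z.
  apply/negP => h; apply: (big 0 (dvdz0 _)); left.
  by move: h; rewrite !dvdzE !absz_nat => h; apply: dvdn_mull.
have pa : ~~ (p%:Z %| a1%:Z)%Z.
  apply/negP => h; apply: (big 0 (dvdz0 _)); left.
  move: h; rewrite !dvdzE !absz_nat => h; apply: dvdn_mulr.
  by rewrite expnS; apply: dvdn_mulr.
have prim : forall j, (0 < j < n)%N -> ~~ (p%:Z %| if odd j then V a1 j else U a1 j)%Z.
  move=> j hj; rewrite -ellE //; apply/negP => /(euclidz pP) /orP [h|h].
  - by move/negP: pa.
  - by apply: (big 0 (dvdz0 _)); right; exists j.
have nlt : (n < p ^ v)%N by [].
exact: (core a1p pP podd n4 nev nlt mU pD prim).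
Qed.
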